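(* Consider the principal–agent model described in the context. For every $a>0$, \[ \sup_{x\in(L(a),\bar x]}\frac{f_a(x\mid a)}{f(x\mid a)}>0. \]
   Context: Model. Effort $a\ge0$; the outcome $X(a)$ is a continuous random variable with support $[L(a),\bar x]$, where $\bar x>0$ is fixed (possibly $+\infty$) and $L:[0,\infty)\to[0,\bar x)$ is nondecreasing on $[0,\infty)$ and continuously differentiable on $(0,\infty)$. $X(a)$ has density $f(x\mid a)$ and cdf $F(x\mid a)$; for each fixed $x\in(L(a),\bar x]$, $f(x\mid a)$ and $F(x\mid a)$ are differentiable in $a>0$ with derivatives $f_a,F_a$, both continuous on $(L(a),\bar x]\times(0,\infty)$, and $F_a<0$ there. Standing assumption (used here): for any nonnegative function $s$ with $\int_{L(a)}^{\bar x}s(x)f(x\mid a)\,dx<\infty$, $\lim_{h\uparrow0}\int_{L(a)}^{\bar x}\frac{f(x\mid a+h)-f(x\mid a)}{h}s(x)\,dx=\int_{L(a)}^{\bar x}\lim_{h\uparrow0}\frac{f(x\mid a+h)-f(x\mid a)}{h}s(x)\,dx$. (The paper's further standing assumptions: $\mathbb{E}[X(a)\mid a]$ is finite and continuous in $a$, $\mathbb{E}[X(a)\mid a]-c(a)\to-\infty$ as $a\to\infty$ for the effort cost $c$, and $a\mapsto\sup_{x\in(L(a),\bar x]}f_a/f$ is continuous on $(0,\infty)$.) *)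

(* Defs.v *)
From HB Require Import structures.
From mathcomp Require Import all_boot all_order all_algebra.
From mathcomp Require Import all_classical all_reals all_analysis.
Set Implicit Arguments. Unset Strict Implicit. Unset Printing Implicit Defensive.
Import Order.TTheory GRing.Theory Num.Theory.
Import numFieldNormedType.Exports.
Local Open Scope classical_set_scope.
Local Open Scope ring_scope.

Definition supp_int (R : realType) (xbar : \bar R) (L : R -> R) (a : R) : set R :=
  [set x : R | L a < x /\ (x%:E <= xbar)%E].

(* Standing assumptions of the principal-agent model.
   f x a = f(x|a), F x a = F(x|a), fa x a = f_a(x|a), Fa x a = F_a(x|a). *)
Definition pa_model (R : realType) (xbar : \bar R) (L : R -> R)
    (f F fa Fa : R -> R -> R) : Prop :=
  (0 < xbar)%E /\
  (forall a : R, 0 <= a -> 0 <= L a /\ ((L a)%:E < xbar)%E) /\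
  (forall a b : R, 0 <= a -> a <= b -> L a <= L b) /\
  (forall a : R, 0 < a -> derivable L a 1) /\
  (forall a : R, 0 < a -> (derive1 L t @[t --> a] --> derive1 L a)) /\
  (forall a : R, 0 <= a -> measurable_fun setT (fun x => f x a)) /\
  (forall a x : R, 0 <= a -> 0 <= f x a) /\
  (forall a x : R, 0 <= a -> ~ (L a <= x /\ (x%:E <= xbar)%E) -> f x a = 0) /\
  (forall a x : R, 0 <= a -> x \in supp_int xbar L a -> 0 < f x a) /\
  (forall a : R, 0 <= a ->
     (\int[@lebesgue_measure R]_(x in setT) (f x a)%:E = 1)%E) /\
  (forall a x : R, 0 <= a ->
     (F x a)%:E = (\int[@lebesgue_measure R]_(t in `]-oo, x]) (f t a)%:E)%E) /\
  (forall a x : R, 0 < a -> x \in supp_int xbar L a ->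
     is_derive a 1 (f x) (fa x a) /\ is_derive a 1 (F x) (Fa x a)) /\
  (let S := [set p : R * R | 0 < p.2 /\ p.1 \in supp_int xbar L p.2] in
   {within S, continuous (fun p : R * R => fa p.1 p.2)} /\
   {within S, continuous (fun p : R * R => Fa p.1 p.2)}) /\
  (forall a x : R, 0 < a -> x \in supp_int xbar L a -> Fa x a < 0) /\
  (* interchange of limit and integral (left derivative) *)
  (forall a : R, 0 < a -> forall s : R -> R,
     (forall x, 0 <= s x) ->
     measurable_fun (supp_int xbar L a) s ->
     (\int[@lebesgue_measure R]_(x in supp_int xbar L a) (s x * f x a)%:E < +oo)%E ->
     (fun h : R => (\int[@lebesgue_measure R]_(x in supp_int xbar L a)
                 (((f x (a + h) - f x a) / h) * s x)%:E)%E)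
       @ 0^'- --> (\int[@lebesgue_measure R]_(x in supp_int xbar L a) (fa x a * s x)%:E)%E).

(* Main.v *)
Require Import Defs.
From HB Require Import structures.
From mathcomp Require Import all_boot all_order all_algebra.
From mathcomp Require Import all_classical all_reals all_analysis.
From mathcomp Require Import ring lra.
Import Order.TTheory GRing.Theory Num.Theory.
Import numFieldNormedType.Exports.
Local Open Scope classical_set_scope.
Local Open Scope ring_scope.

Theorem lemmaA1 (R : realType) (xbar : \bar R) (L : R -> R)
    (f F fa Fa : R -> R -> R) :
  pa_model xbar L f F fa Fa ->
  forall a : R, 0 < a ->
  (0 < ereal_sup [set (fa x a / f x a)%:E | x in supp_int xbar L a])%E.
Proof.
move=> [xb0 [HL [Lmono [Ld [Ldc [fmeas [f0 [fout [fpos [fint [FE [Hder [Hcont [Fneg Hint]]]]]]]]]]]]]] a a0.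
rewrite ltNge; apply/negP => Hsup.
have fale : forall y, y \in supp_int xbar L a -> fa y a <= 0.
  move=> y ys.
  have : ((fa y a / f y a)%:E <= 0)%E.
    apply: le_trans Hsup; apply: ereal_sup_ubound; exists y => //.
    by move: ys; rewrite inE.
  have fy := fpos a y (ltW a0) ys.
  rewrite lee_fin => H.
  have -> : fa y a = (fa y a / f y a) * f y a by rewrite divfK // gt_eqF.
  by rewrite mulr_le0_ge0 // ltW.
have [x xs] : exists x, x \in supp_int xbar L a.
  have [_ HLa] := HL a (ltW a0).
  case E : xbar HLa xb0 => [r| |] //= Lr _.
  - by exists r; rewrite inE; split => //; rewrite -lte_fin.
  - by exists (L a + 1); rewrite inE; split; [rewrite ltrDl | rewrite leey].
set I : set R := [set` `]x, +oo[%O].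
set s : R -> R := \1_I.
have mI : measurable I by exact: measurable_itv.
have K : forall k : R -> R, (forall y, x < y -> ~ (y%:E <= xbar)%E -> k y = 0) ->
    (\int[@lebesgue_measure R]_(y in supp_int xbar L a) (k y * s y)%:E =
     \int[@lebesgue_measure R]_(y in I) (k y)%:E)%E.
  move=> k hk; rewrite integral_mkcond [RHS]integral_mkcond.
  apply: eq_integral => y _; rewrite !patchE /s indicE.
  case: (boolP (y \in supp_int xbar L a)) => ys; case: (boolP (y \in I)) => yI.
  - by rewrite mulr1.
  - by rewrite mulr0.
  - move: yI; rewrite inE /I /= in_itv /= andbT => xy.
    rewrite hk //= => yx; move/negP: ys; apply; rewrite inE; split => //.
    move: xs; rewrite inE => -[+ _]; move/lt_trans; exact.
  - by [].
have intf : forall b, 0 <= b ->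
    (@lebesgue_measure R).-integrable setT (EFin \o f^~ b).
  move=> b b0; apply/integrableP; split.
    apply/measurable_realfun.measurable_EFinP; exact: fmeas.
  rewrite [X in (X < _)%E](_ : _ = \int[@lebesgue_measure R]_y (f y b)%:E)%E; last first.
    by apply: eq_integral => y _; apply: gee0_abs; rewrite /= lee_fin f0.
  by rewrite fint // ltry.
have intI : forall b, 0 <= b ->
    (@lebesgue_measure R).-integrable I (EFin \o f^~ b).
  move=> b b0; apply: integrableS (intf b b0) => //.
have Gb : forall b, 0 <= b ->
    (\int[@lebesgue_measure R]_(y in I) (f y b)%:E = (1 - F x b)%:E)%E.
  move=> b b0; have := fint b b0.
  rewrite -(setUv `]-oo, x]) ge0_integral_setU //.
  - rewrite -FE // setCitvl -/I.
    case: (\int[@lebesgue_measure R]_(y in I) (f y b)%:E)%E => [r||] //= /eqP.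
    + rewrite -EFinD eqe => /eqP <-; congr EFin; ring.
  - exact: measurableC.
  - apply/measurable_realfun.measurable_EFinP; exact: measurable_funTS (fmeas b b0).
  - by move=> y _; rewrite lee_fin f0.
  - by apply/disj_setPCl.
have DQE : forall h, 0 <= a + h -> h != 0 ->
    (\int[@lebesgue_measure R]_(y in supp_int xbar L a)
       (((f y (a + h) - f y a) / h) * s y)%:E =
     ((F x a - F x (a + h)) / h)%:E)%E.
  move=> h ah h0.
  rewrite K; last first.
    move=> y xy yx.
    have fo : forall b, 0 <= b -> f y b = 0.
      by move=> b b0; apply: fout => // -[_ ?].
    by rewrite !fo ?(ltW a0) // subrr mul0r.
  under eq_integral => y _ do rewrite EFinM EFinB.
  rewrite integralZr //; last first.
    by apply: integrableB => //; [exact: intI | exact: intI (ltW a0)].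
  rewrite integralB_EFin //; [|exact: intI|exact: intI (ltW a0)].
  rewrite !Gb // ?(ltW a0) // -EFinB -EFinM; congr EFin.
  by rewrite /=; ring.
have [_ dF] := Hder a x a0 xs.
have cF : (fun h => h^-1 *: ((F x \o shift a) (h *: 1) - F x a)) @ 0^' --> Fa x a.
  by case: dF => dF dv; rewrite -dv.
have c1 : (fun h => ((F x a - F x (a + h)) / h)%:E) @ 0^'- --> (- Fa x a)%:E.
  apply: cvg_EFin; first by near=> h.
  apply: cvg_dnbhs_at_left.
  apply: cvg_trans (cvgN cF); apply: near_eq_cvg; near=> h => /=.
  change (- (h^-1 * (F x (h * 1 + a) - F x a)) = (F x a - F x (a + h)) / h).
  by rewrite mulr1 (addrC h) mulrC -mulNr opprB.
have c2 := Hint a a0 s.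
have s0 : forall y, 0 <= s y by move=> y; rewrite /s indicE ler0n.
have ms : measurable_fun (supp_int xbar L a) s by exact: measurable_realfun.measurable_indic.
have sfin : (\int[@lebesgue_measure R]_(y in supp_int xbar L a) (s y * f y a)%:E < +oo)%E.
  under eq_integral => y _ do rewrite mulrC.
  rewrite K; first by rewrite Gb ?(ltW a0) // ltry.
  move=> y xy yx; rewrite fout //; [exact: ltW|by move=> []].
have c3 : (\int[@lebesgue_measure R]_(y in supp_int xbar L a)
       (((f y (a + h) - f y a) / h) * s y)%:E)%E @[h --> 0^'-] --> (- Fa x a)%:E.
  apply: cvg_trans c1; apply: near_eq_cvg; near=> h.
  apply: esym; apply: DQE.
  - have : - a < h by near: h; apply: nbhs_left_gt; rewrite ltrNl oppr0.
    by move=> ha; rewrite -lerBlDl sub0r ltW.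
  - have : h < 0 by near: h; exact: nbhs_left_lt.
    by move/ltr0_neq0.
have := cvg_unique (@ereal_hausdorff R) (c2 s0 ms sfin) c3.
have Hle : (\int[@lebesgue_measure R]_(y in supp_int xbar L a) (fa y a * s y)%:E <= 0)%E.
  under eq_integral => y _ do rewrite -[X in X%:E]opprK EFinN.
  rewrite integral_ge0N; first by rewrite oppe_le0 integral_ge0 // => y ys;
    rewrite lee_fin oppr_ge0 mulr_le0_ge0 // fale // inE.
  by move=> y ys; rewrite lee_fin oppr_ge0 mulr_le0_ge0 // fale // inE.
move=> Heq; move: Hle; rewrite Heq lee_fin oppr_le0 leNgt.
by rewrite (Fneg a x a0 xs).
Unshelve. all: by end_near.
Qed.
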